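(* Let $\|\cdot\|$ be a norm on $\mathbb{R}^2$. For every $\phi\in\mathsf{D}_0$ and every $\psi\in\big(\pi_{\Omega^\circ},\,2\pi_{\Omega^\circ}-\delta_-(\phi)\big)$ with $\phi+\psi\in\mathsf{D}_0$, one has $\mathcal{J}_R(\phi,\psi)>0$. In particular, if the norm is $C^1$, then $\mathcal{J}_R(\phi,\psi)>0$ for all $\phi\in\mathsf{D}_0$ and $\psi\in(\pi_{\Omega^\circ},2\pi_{\Omega^\circ})$ with $\phi+\psi\in\mathsf{D}_0$.
   Context: Regularity of the norm: the norm is called $C^1$ if it is of class $C^1$ on $\mathbb{R}^2\setminus\{0\}$. Convex trigonometry: let $\Omega=\{x:\|x\|\le1\}$ and $\Omega^\circ=\{p:\langle p,x\rangle\le1\ \forall x\in\Omega\}$ (the closed unit ball of the dual norm). For a compact convex $S\subset\mathbb{R}^2$ with $0$ in its interior, let $\pi_S$ be the area of $S$; for $\theta\in[0,2\pi_S)$ let $P^S_\theta\in\partial S$ be the point such that the region of $S$ swept counterclockwise from the ray through $(1,0)$ to the ray through $P^S_\theta$ has area $\theta/2$; extend $2\pi_S$-periodically and write $P^S_\theta=(\cos_S\theta,\sin_S\theta)$. Angles $\theta$ and $\phi$ correspond if $\cos_\Omega(\theta)\cos_{\Omega^\circ}(\phi)+\sin_\Omega(\theta)\sin_{\Omega^\circ}(\phi)=1$. $C_\circ$ is the nondecreasing (possibly multivalued) map on $\mathbb{R}$ assigning to $\phi$ the maximal closed interval of angles $\theta$ corresponding to $\phi$, normalized so that $C_\circ(\phi+2k\pi_{\Omega^\circ})=C_\circ(\phi)+2k\pi_\Omega$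 for $k\in\mathbb{Z}$; $C^\circ$ is defined symmetrically, and $\delta_\pm(\phi)\ge0$ are defined by $C^\circ(C_\circ(\phi))=[\phi-\delta_-(\phi),\phi+\delta_+(\phi)]$. $\mathsf{D}_0$ is the set of angles where $C_\circ$ is single-valued (equivalently where $\sin_{\Omega^\circ},\cos_{\Omega^\circ}$ are differentiable); for $\phi\in\mathsf{D}_0$ write $\phi_\circ=C_\circ(\phi)$. Reduced Jacobian: for $\phi,\phi+\psi\in\mathsf{D}_0$, $\mathcal{J}_R(\phi,\psi)=2-\big(\sin_{\Omega^\circ}(\phi+\psi)\sin_\Omega(\phi_\circ)+\cos_{\Omega^\circ}(\phi+\psi)\cos_\Omega(\phi_\circ)\big)-\big(\sin_\Omega((\phi+\psi)_\circ)\sin_{\Omega^\circ}(\phi)+\cos_\Omega((\phi+\psi)_\circ)\cos_{\Omega^\circ}(\phi)\big)-\psi\big(\sin_\Omega((\phi+\psi)_\circ)\cos_\Omega(\phi_\circ)-\cos_\Omega((\phi+\psi)_\circ)\sin_\Omega(\phi_\circ)\big)$. *)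

(* Defs.v *)
From Stdlib Require Import Reals Lra ZArith ClassicalEpsilon.
From Coquelicot Require Import Coquelicot.
Open Scope R_scope.

Definition dot2 (p x : R * R) : R := fst p * fst x + snd p * snd x.

Definition is_norm2 (N : R * R -> R) : Prop :=
  (forall x, 0 <= N x) /\
  (forall x, N x = 0 -> x = (0, 0)) /\
  (forall (l : R) x, N (l * fst x, l * snd x) = Rabs l * N x) /\
  (forall x y, N (fst x + fst y, snd x + snd y) <= N x + N y).

Definition norm_C1 (N : R * R -> R) : Prop :=
  exists dx dy : R -> R -> R,
    forall x y, (x, y) <> (0, 0) ->
      differentiable_pt_lim (fun u v => N (u, v)) x y (dx x y) (dy x y) /\
      continuity_2d_pt dx x y /\ continuity_2d_pt dy x y.

Definition Omega (N : R * R -> R) : R * R -> Prop := fun x => N x <= 1.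
Definition Omega_polar (N : R * R -> R) : R * R -> Prop :=
  fun p => forall x, Omega N x -> dot2 p x <= 1.

(* radial function of a star-shaped set S in the Euclidean direction t:
   the boundary point of S on the ray of angle t is rad S t (cos t, sin t) *)
Definition rad (S : R * R -> Prop) (t : R) : R :=
  real (Lub_Rbar (fun r => 0 <= r /\ S (r * cos t, r * sin t))).

(* area of the part of S swept counterclockwise from the ray through (1,0)
   to the ray of Euclidean angle a (0 <= a <= 2 PI), in polar coordinates *)
Definition sector_area (S : R * R -> Prop) (a : R) : R :=
  RInt (fun t => (rad S t) ^ 2 / 2) 0 a.

Definition piS (S : R * R -> Prop) : R := sector_area S (2 * PI).

(* P^S_theta, extended 2 pi_S - periodically *)
Definition convP (S : R * R -> Prop) (th : R) : R * R :=
  epsilon (inhabits (0, 0)) (fun P =>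
    exists (k : Z) (a : R),
      0 <= a < 2 * PI /\
      0 <= th - 2 * IZR k * piS S < 2 * piS S /\
      sector_area S a = (th - 2 * IZR k * piS S) / 2 /\
      P = (rad S a * cos a, rad S a * sin a)).

Definition cosS (S : R * R -> Prop) (th : R) : R := fst (convP S th).
Definition sinS (S : R * R -> Prop) (th : R) : R := snd (convP S th).

Definition corresp (N : R * R -> R) (th ph : R) : Prop :=
  cosS (Omega N) th * cosS (Omega_polar N) ph
  + sinS (Omega N) th * sinS (Omega_polar N) ph = 1.

(* Cc : R -> R -> Prop is the (multivalued) map C_o : Cc ph th means
   th \in C_o(ph).  Specification of C_o as in the paper. *)
Definition is_C_o (N : R * R -> R) (Cc : R -> R -> Prop) : Prop :=
  (forall ph, exists a b, a <= b /\
     (forall th, Cc ph th <-> a <= th <= b) /\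
     (forall th, a <= th <= b -> corresp N th ph) /\
     (forall a' b', a' <= a -> b <= b' ->
        (forall th, a' <= th <= b' -> corresp N th ph) -> a' = a /\ b' = b)) /\
  (forall ph1 ph2 th1 th2, ph1 < ph2 -> Cc ph1 th1 -> Cc ph2 th2 -> th1 <= th2) /\
  (forall (k : Z) ph th,
     Cc (ph + 2 * IZR k * piS (Omega_polar N)) (th + 2 * IZR k * piS (Omega N))
     <-> Cc ph th).

(* C^o is the inverse correspondence of C_o, so
   C^o(C_o(ph)) = { ph' | exists th, th \in C_o(ph) /\ th \in C_o(ph') }
   = [ph - delta_-(ph), ph + delta_+(ph)] *)
Definition delta_minus (Cc : R -> R -> Prop) (ph : R) : R :=
  ph - real (Glb_Rbar (fun ph' => exists th, Cc ph th /\ Cc ph' th)).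

Definition D0 (Cc : R -> R -> Prop) (ph : R) : Prop :=
  exists th, forall th', Cc ph th' <-> th' = th.

(* Reduced Jacobian; pho = C_o(ph), phpso = C_o(ph + ps) *)
Definition JR (N : R * R -> R) (ph ps pho phpso : R) : R :=
  let cO := cosS (Omega N) in let sO := sinS (Omega N) in
  let cP := cosS (Omega_polar N) in let sP := sinS (Omega_polar N) in
  2 - (sP (ph + ps) * sO pho + cP (ph + ps) * cO pho)
    - (sO phpso * sP ph + cO phpso * cP ph)
    - ps * (sO phpso * cO pho - cO phpso * sO pho).

(* Main.v *)
Require Import Defs.
From Stdlib Require Import Reals Lra ZArith Lia ClassicalEpsilon.
From Coquelicot Require Import Coquelicot.
Open Scope R_scope.


Lemma shift_Z (g : R -> R) (c d : R) :
  (forall t, g (t + c) = g t + d) ->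
  forall (k : Z) t, g (t + IZR k * c) = g t + IZR k * d.
Proof.
  intros H k. induction k using Z.peano_ind; intros t.
  - simpl. replace (t + 0 * c) with t by ring. ring.
  - rewrite succ_IZR. replace (t + (IZR k + 1) * c) with ((t + IZR k * c) + c) by ring.
    rewrite H, IHk. ring.
  - rewrite <- Z.sub_1_r, minus_IZR. simpl.
    specialize (H (t + (IZR k - 1) * c)).
    replace (t + (IZR k - 1) * c + c) with (t + IZR k * c) in H by ring.
    rewrite IHk in H. lra.
Qed.


Definition nice (S : R * R -> Prop) : Prop :=
  (forall t, continuity_pt (rad S) t) /\ (forall t, 0 < rad S t) /\
  (forall t, rad S (t + PI) = rad S t).

Definition fS S := fun t => rad S t ^ 2 / 2.

Lemma fS_cont S : nice S -> forall t, continuous (fS S) t.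
Proof.
  intros [Hc _] t. apply continuity_pt_filterlim. unfold fS.
  apply continuity_pt_div. 2: apply continuity_pt_const; intros ? ?; auto. 2: lra.
  simpl. apply continuity_pt_mult. apply Hc. apply continuity_pt_mult. apply Hc.
  apply continuity_pt_const; intros ? ?; auto.
Qed.

Lemma fS_ex S : nice S -> forall a b, ex_RInt (fS S) a b.
Proof. intros H a b. apply (@ex_RInt_continuous R_CompleteNormedModule). intros; apply fS_cont; auto. Qed.

Lemma sector_area_eq S a : sector_area S a = RInt (fS S) 0 a.
Proof. reflexivity. Qed.

Lemma sa_chasles S : nice S -> forall a b, sector_area S b = sector_area S a + RInt (fS S) a b.
Proof.
  intros H a b. unfold sector_area. fold (fS S).
  rewrite <- (RInt_Chasles (fS S) 0 a b) by (apply fS_ex; auto). reflexivity.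
Qed.

Lemma sa_0 S : sector_area S 0 = 0.
Proof. unfold sector_area. apply (@RInt_point R_CompleteNormedModule). Qed.

Lemma sa_PI S : nice S -> forall a, sector_area S (a + PI) = sector_area S a + sector_area S PI.
Proof.
  intros H a. rewrite (sa_chasles S H PI (a + PI)).
  assert (RInt (fS S) PI (a + PI) = sector_area S a).
  { unfold sector_area. fold (fS S).
    replace PI with (1 * 0 + PI) at 1 by ring. replace (a + PI) with (1 * a + PI) by ring.
    rewrite <- RInt_comp_lin by (apply fS_ex; auto).
    apply RInt_ext. intros x _. unfold scal; simpl; unfold mult; simpl.
    unfold fS. replace (1 * x + PI) with (x + PI) by ring. destruct H as [_ [_ Hp]].
    rewrite Hp. ring. }
  lra.
Qed.

Lemma piS_half S : nice S -> piS S = 2 * sector_area S PI.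
Proof.
  intros H. unfold piS. replace (2 * PI) with (PI + PI) by ring. rewrite sa_PI; auto. ring.
Qed.

Lemma sa_halfshift S : nice S -> forall a, sector_area S (a + PI) = sector_area S a + piS S / 2.
Proof. intros H a. rewrite sa_PI, piS_half; auto. field. Qed.

Lemma sa_incr S : nice S -> forall a b, a < b -> sector_area S a < sector_area S b.
Proof.
  intros H a b Hab. rewrite (sa_chasles S H a b).
  assert (0 < RInt (fS S) a b).
  { apply RInt_gt_0; auto. intros x _. unfold fS. destruct H as [_ [Hp _]].
    specialize (Hp x). nra. intros; apply fS_cont; auto. }
  lra.
Qed.

Lemma sa_le S : nice S -> forall a b, sector_area S a <= sector_area S b -> a <= b.
Proof.
  intros H a b Hl. destruct (Rle_or_lt a b); auto. apply (sa_incr S H) in H0. lra.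
Qed.

Lemma sa_inj S : nice S -> forall a b, sector_area S a = sector_area S b -> a = b.
Proof.
  intros H a b E. apply Rle_antisym; apply (sa_le S H); lra.
Qed.

Lemma piS_pos S : nice S -> 0 < piS S.
Proof.
  intros H. unfold piS. rewrite <- (sa_0 S). apply sa_incr; auto. pose proof PI_RGT_0; lra.
Qed.

Lemma sa_cont S : nice S -> forall x, continuous (sector_area S) x.
Proof.
  intros H x. apply (@ex_derive_continuous R_AbsRing R_NormedModule). eexists.
  apply (is_derive_RInt (fS S) (sector_area S) 0 x).
  - apply filter_forall. intros b. apply (@RInt_correct R_CompleteNormedModule). apply fS_ex; auto.
  - apply fS_cont; auto.
Qed.

Lemma sa_2PIshift S : nice S -> forall (k : Z) a,
  sector_area S (a + IZR k * (2 * PI)) = sector_area S a + IZR k * piS S.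
Proof.
  intros H. apply shift_Z. intros t. replace (t + 2 * PI) with (t + PI + PI) by ring.
  rewrite !sa_halfshift; auto. field.
Qed.

Lemma sa_surj S : nice S -> forall y, exists b, sector_area S b = y.
Proof.
  intros H y. pose proof (piS_pos S H) as Hp.
  set (k := (up (y / piS S) - 1)%Z).
  destruct (archimed (y / piS S)) as [A1 A2].
  assert (Hk : IZR k * piS S <= y < IZR k * piS S + piS S).
  { unfold k. rewrite minus_IZR. simpl.
    assert (IZR (up (y / piS S)) * piS S > y).
    { apply Rmult_gt_compat_r with (r := piS S) in A1; auto.
      unfold Rdiv in A1. rewrite Rmult_assoc, Rinv_l in A1; lra. }
    assert (IZR (up (y / piS S)) * piS S - y <= piS S).
    { apply Rmult_le_compat_r with (r := piS S) in A2; [|lra].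
      unfold Rdiv in A2. rewrite Rmult_minus_distr_r, Rmult_assoc, Rinv_l in A2; lra. }
    nra. }
  destruct (IVT_gen_consistent (sector_area S) 0 (2 * PI) (y - IZR k * piS S)) as [a [Ha Ea]].
  - apply sa_cont; auto.
  - rewrite sa_0. fold (piS S). rewrite Rmin_left, Rmax_right; lra.
  - exists (a + IZR k * (2 * PI)). rewrite sa_2PIshift, Ea; auto. ring.
Qed.


Lemma floor_ex (x c : R) : 0 < c -> exists k : Z, IZR k * c <= x < IZR k * c + c.
Proof.
  intros Hc. exists (up (x / c) - 1)%Z.
  destruct (archimed (x / c)) as [A1 A2].
  rewrite minus_IZR. simpl.
  assert (IZR (up (x / c)) * c > x).
  { apply Rmult_gt_compat_r with (r := c) in A1; auto.
    unfold Rdiv in A1. rewrite Rmult_assoc, Rinv_l in A1; lra. }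
  assert (IZR (up (x / c)) * c - x <= c).
  { apply Rmult_le_compat_r with (r := c) in A2; [|lra].
    unfold Rdiv in A2. rewrite Rmult_minus_distr_r, Rmult_assoc, Rinv_l in A2; lra. }
  nra.
Qed.

Lemma cos_2PIk (k : Z) t : cos (t + IZR k * (2 * PI)) = cos t.
Proof.
  pose proof (shift_Z cos (2 * PI) 0) as H.
  rewrite H. ring. intros. rewrite cos_plus, cos_2PI, sin_2PI. ring.
Qed.

Lemma sin_2PIk (k : Z) t : sin (t + IZR k * (2 * PI)) = sin t.
Proof.
  pose proof (shift_Z sin (2 * PI) 0) as H.
  rewrite H. ring. intros. rewrite sin_plus, cos_2PI, sin_2PI. ring.
Qed.

Lemma rad_2PIk S : nice S -> forall (k : Z) t, rad S (t + IZR k * (2 * PI)) = rad S t.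
Proof.
  intros [_ [_ Hp]] k t.
  pose proof (shift_Z (rad S) (2 * PI) 0) as H.
  rewrite H. ring. intros. replace (t0 + 2 * PI) with (t0 + PI + PI) by ring.
  rewrite !Hp. ring.
Qed.

Lemma convP_char S : nice S -> forall th b, sector_area S b = th / 2 ->
  convP S th = (rad S b * cos b, rad S b * sin b).
Proof.
  intros H th b Hb. pose proof (piS_pos S H) as Hp.
  pose proof PI_RGT_0 as HPI.
  unfold convP.
  match goal with |- epsilon ?i ?P = _ => assert (HE : exists x, P x) end.
  { destruct (floor_ex b (2 * PI)) as [k Hk]; [lra|].
    set (a := b + IZR (- k) * (2 * PI)).
    assert (Ga : sector_area S a = th / 2 - IZR k * piS S).
    { unfold a. rewrite sa_2PIshift, Hb, opp_IZR; auto. ring. }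
    assert (0 <= a < 2 * PI) by (unfold a; rewrite opp_IZR; lra).
    assert (0 <= sector_area S a < piS S).
    { split.
      - rewrite <- (sa_0 S). destruct (Req_dec a 0) as [E|E]. rewrite E; lra.
        left. apply sa_incr; auto. lra.
      - unfold piS. apply sa_incr; auto. lra. }
    exists (rad S a * cos a, rad S a * sin a), k, a.
    split; [auto|]. split; [lra|]. split; [lra|]. reflexivity. }
  apply (epsilon_spec (inhabits (0, 0))) in HE.
  destruct HE as [k [a [Ha [Hr [Hs E]]]]]. rewrite E.
  assert (b = a + IZR k * (2 * PI)).
  { apply (sa_inj S H). rewrite sa_2PIshift, Hs, Hb; auto. field. }
  subst b. rewrite rad_2PIk, cos_2PIk, sin_2PIk; auto.
Qed.

Lemma convP_param S : nice S -> forall th, exists b, sector_area S b = th / 2 /\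
  convP S th = (rad S b * cos b, rad S b * sin b).
Proof.
  intros H th. destruct (sa_surj S H (th / 2)) as [b Hb]. exists b. split; auto.
  apply convP_char; auto.
Qed.

Lemma convP_half S : nice S -> forall th,
  convP S (th + piS S) = (- fst (convP S th), - snd (convP S th)).
Proof.
  intros H th. destruct (convP_param S H th) as [b [Hb E]]. rewrite E. simpl.
  rewrite (convP_char S H _ (b + PI)).
  - rewrite neg_cos, neg_sin. destruct H as [_ [_ Hp]]. rewrite Hp. f_equal; ring.
  - rewrite sa_halfshift, Hb; auto. field.
Qed.

Lemma convP_full S : nice S -> forall th, convP S (th + 2 * piS S) = convP S th.
Proof.
  intros H th. replace (th + 2 * piS S) with (th + piS S + piS S) by ring.
  rewrite !convP_half; auto. simpl. destruct (convP S th); simpl; f_equal; ring.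
Qed.


Lemma cont_dom (f g h : R -> R) (K x0 : R) : 0 <= K ->
  (forall x, Rabs (f x - f x0) <= K * (Rabs (g x - g x0) + Rabs (h x - h x0))) ->
  continuity_pt g x0 -> continuity_pt h x0 -> continuity_pt f x0.
Proof.
  intros HK Hd Hg Hh eps Heps.
  assert (He : eps / (2 * (K + 1)) > 0) by (apply Rdiv_lt_0_compat; lra).
  destruct (Hg _ He) as [a1 [Ha1 H1]]. destruct (Hh _ He) as [a2 [Ha2 H2]].
  exists (Rmin a1 a2). split. apply Rmin_glb_lt; lra.
  intros x [Dx Hx]. simpl in *. unfold R_dist in *.
  assert (Hx1 : Rabs (x - x0) < a1) by (pose proof (Rmin_l a1 a2); lra).
  assert (Hx2 : Rabs (x - x0) < a2) by (pose proof (Rmin_r a1 a2); lra).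
  specialize (H1 x (conj Dx Hx1)). specialize (H2 x (conj Dx Hx2)). simpl in H1, H2.
  unfold R_dist in H1, H2.
  specialize (Hd x).
  assert (K * (Rabs (g x - g x0) + Rabs (h x - h x0)) <= K * (2 * (eps / (2 * (K + 1))))).
  { apply Rmult_le_compat_l; lra. }
  assert (K * (2 * (eps / (2 * (K + 1)))) < eps).
  { replace (K * (2 * (eps / (2 * (K + 1))))) with (eps * (K / (K + 1))) by (field; lra).
    assert (K / (K + 1) < 1). { apply Rmult_lt_reg_r with (K + 1). lra.
      unfold Rdiv. rewrite Rmult_assoc, Rinv_l; lra. }
    nra. }
  lra.
Qed.


Lemma N_hom N : is_norm2 N -> forall l a b, N (l * a, l * b) = Rabs l * N (a, b).
Proof. intros [_ [_ [H _]]] l a b. apply (H l (a, b)). Qed.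

Lemma N_tri N : is_norm2 N -> forall a b c d, N (a + c, b + d) <= N (a, b) + N (c, d).
Proof. intros [_ [_ [_ H]]] a b c d. apply (H (a, b) (c, d)). Qed.

Lemma N_pos N : is_norm2 N -> forall x, 0 <= N x.
Proof. intros [H _]. auto. Qed.

Lemma N_def N : is_norm2 N -> forall a b, N (a, b) = 0 -> a = 0 /\ b = 0.
Proof. intros [_ [H _]] a b E. apply H in E. inversion E. auto. Qed.

Lemma N_zero N : is_norm2 N -> N (0, 0) = 0.
Proof. intros H. pose proof (N_hom N H 0 0 0). rewrite Rmult_0_l, Rabs_R0, Rmult_0_l in H0. auto. Qed.

Lemma N_opp N : is_norm2 N -> forall a b, N (- a, - b) = N (a, b).
Proof. intros H a b. pose proof (N_hom N H (-1) a b).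
  replace (-1 * a) with (-a) in H0 by ring. replace (-1 * b) with (-b) in H0 by ring.
  rewrite H0. rewrite Rabs_left by lra. ring. Qed.

Definition KN N := N (1, 0) + N (0, 1).

Lemma N_up N : is_norm2 N -> forall a b, N (a, b) <= KN N * (Rabs a + Rabs b).
Proof.
  intros H a b. unfold KN.
  pose proof (N_tri N H a 0 0 b). rewrite Rplus_0_r, Rplus_0_l in H0.
  pose proof (N_hom N H a 1 0). pose proof (N_hom N H b 0 1).
  rewrite Rmult_1_r, Rmult_0_r in H1. rewrite Rmult_1_r, Rmult_0_r in H2.
  pose proof (N_pos N H (1,0)). pose proof (N_pos N H (0,1)).
  pose proof (Rabs_pos a). pose proof (Rabs_pos b). nra.
Qed.

Lemma KN_pos N : is_norm2 N -> 0 < KN N.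
Proof.
  intros H. unfold KN. pose proof (N_pos N H (1,0)). pose proof (N_pos N H (0,1)).
  destruct (Req_dec (N (1,0)) 0) as [E|E]. apply N_def in E; auto. lra. lra.
Qed.

Lemma N_lip N : is_norm2 N -> forall a b c d,
  Rabs (N (a, b) - N (c, d)) <= KN N * (Rabs (a - c) + Rabs (b - d)).
Proof.
  intros H a b c d.
  pose proof (N_tri N H c d (a - c) (b - d)).
  replace (c + (a - c)) with a in H0 by ring. replace (d + (b - d)) with b in H0 by ring.
  pose proof (N_tri N H a b (c - a) (d - b)).
  replace (a + (c - a)) with c in H1 by ring. replace (b + (d - b)) with d in H1 by ring.
  pose proof (N_up N H (a - c) (b - d)). pose proof (N_up N H (c - a) (d - b)).
  rewrite (Rabs_minus_sym c a), (Rabs_minus_sym d b) in H3.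
  apply Rabs_le. lra.
Qed.


Lemma cont_id x : continuity_pt id x.
Proof. apply derivable_continuous_pt. apply derivable_pt_id. Qed.

Lemma gmin N (e : R) : is_norm2 N -> (e = 1 \/ e = -1) ->
  exists m, 0 < m /\ forall s, -1 <= s <= 1 -> m <= N (s, e * (1 - Rabs s)).
Proof.
  intros H He.
  set (g := fun s => N (s, e * (1 - Rabs s))).
  assert (Hc : forall s, continuity_pt g s).
  { intros s0. apply (cont_dom g id (fun s => e * (1 - Rabs s)) (KN N) s0).
    - pose proof (KN_pos N H); lra.
    - intros x. unfold g, id. apply N_lip; auto.
    - apply cont_id.
    - apply continuity_pt_mult. apply continuity_pt_const; intros ? ?; auto.
      apply continuity_pt_minus. apply continuity_pt_const; intros ? ?; auto.
      apply Rcontinuity_abs. }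
  destruct (continuity_ab_min g (-1) 1) as [mx [Hm Hmx]]. lra. intros; apply Hc.
  exists (g mx). split.
  - unfold g. destruct (Req_dec (N (mx, e * (1 - Rabs mx))) 0) as [E|E].
    + apply N_def in E; auto. destruct E as [E1 E2]. subst mx. rewrite Rabs_R0 in E2. lra.
    + pose proof (N_pos N H (mx, e * (1 - Rabs mx))). lra.
  - intros s Hs. apply Hm. auto.
Qed.

Lemma N_low N : is_norm2 N -> exists c, 0 < c /\ forall a b, c * (Rabs a + Rabs b) <= N (a, b).
Proof.
  intros H. destruct (gmin N 1 H) as [m1 [Hm1 G1]]; auto.
  destruct (gmin N (-1) H) as [m2 [Hm2 G2]]; auto.
  exists (Rmin m1 m2). split. apply Rmin_glb_lt; auto.
  intros a b. set (L := Rabs a + Rabs b).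
  assert (HLd : L = Rabs a + Rabs b) by reflexivity. clearbody L.
  pose proof (Rabs_pos a). pose proof (Rabs_pos b).
  destruct (Req_dec L 0) as [E|E].
  - rewrite E, Rmult_0_r. apply N_pos; auto.
  - assert (HL : 0 < L) by lra.
    set (s := a / L).
    assert (Hs : Rabs s = Rabs a / L).
    { unfold s. rewrite Rabs_div, (Rabs_right L); lra. }
    assert (Hs1 : -1 <= s <= 1).
    { assert (Rabs s <= 1).
      { rewrite Hs. apply Rmult_le_reg_r with L; auto.
        unfold Rdiv. rewrite Rmult_assoc, Rinv_l by exact E. lra. }
      pose proof (Rle_abs s). pose proof (Rle_abs (-s)) as X. rewrite Rabs_Ropp in X. lra. }
    assert (Ea : a = L * s) by (unfold s; field; lra).
    destruct (Rle_or_lt 0 b) as [Hb|Hb].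
    + assert (Eb : b = L * (1 * (1 - Rabs s))).
      { rewrite Hs. replace (L * (1 * (1 - Rabs a / L))) with (L - Rabs a) by (field; lra).
        rewrite (Rabs_right b) in HLd by lra. lra. }
      rewrite Ea, Eb. rewrite N_hom, Rabs_right by (auto; lra).
      specialize (G1 s Hs1). pose proof (Rmin_l m1 m2). nra.
    + assert (Eb : b = L * (-1 * (1 - Rabs s))).
      { rewrite Hs. replace (L * (-1 * (1 - Rabs a / L))) with (- (L - Rabs a)) by (field; lra).
        rewrite (Rabs_left b) in HLd by lra. lra. }
      rewrite Ea, Eb. rewrite N_hom, Rabs_right by (auto; lra).
      specialize (G2 s Hs1). pose proof (Rmin_r m1 m2). nra.
Qed.


Definition nN (N : R * R -> R) t := N (cos t, sin t).

Lemma nN_pos N : is_norm2 N -> forall t, 0 < nN N t.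
Proof.
  intros H t. unfold nN. destruct (Req_dec (N (cos t, sin t)) 0) as [E|E].
  - apply N_def in E; auto. destruct E as [E1 E2]. pose proof (sin2_cos2 t).
    rewrite E1, E2 in H0. unfold Rsqr in H0. lra.
  - pose proof (N_pos N H (cos t, sin t)). lra.
Qed.

Lemma nN_cont N : is_norm2 N -> forall t, continuity_pt (nN N) t.
Proof.
  intros H t. apply (cont_dom (nN N) cos sin (KN N) t).
  - pose proof (KN_pos N H); lra.
  - intros x. unfold nN. apply N_lip; auto.
  - apply continuity_cos. - apply continuity_sin.
Qed.

Lemma rad_Omega N : is_norm2 N -> forall t, rad (Omega N) t = 1 / nN N t.
Proof.
  intros H t. unfold rad. pose proof (nN_pos N H t) as Hp.
  rewrite (is_lub_Rbar_unique _ (Finite (1 / nN N t))). reflexivity.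
  split.
  - intros r [Hr Hr2]. unfold Omega in Hr2. rewrite N_hom, Rabs_right in Hr2 by (auto; lra).
    simpl. fold (nN N t) in Hr2. apply Rmult_le_reg_r with (nN N t); auto.
    unfold Rdiv. rewrite Rmult_assoc, Rinv_l; lra.
  - intros b Hb. apply Hb. split.
    + left. apply Rdiv_lt_0_compat; lra.
    + unfold Omega. rewrite N_hom. fold (nN N t). rewrite Rabs_right.
      right. field. lra. left. apply Rdiv_lt_0_compat; lra. auto.
Qed.

Lemma nice_Omega N : is_norm2 N -> nice (Omega N).
Proof.
  intros H. split; [|split].
  - intros t. eapply continuity_pt_ext. intros x. symmetry. apply rad_Omega; auto.
    apply continuity_pt_div. apply continuity_pt_const; intros ? ?; auto.
    apply nN_cont; auto. pose proof (nN_pos N H t); lra.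
  - intros t. rewrite rad_Omega; auto. apply Rdiv_lt_0_compat. lra. apply nN_pos; auto.
  - intros t. rewrite !rad_Omega; auto. unfold nN. rewrite neg_cos, neg_sin, N_opp; auto.
Qed.

Lemma Omega_point N : is_norm2 N -> forall t,
  Omega N (rad (Omega N) t * cos t, rad (Omega N) t * sin t).
Proof.
  intros H t. red. rewrite N_hom, rad_Omega; auto. fold (nN N t).
  pose proof (nN_pos N H t). rewrite Rabs_right. right. field. lra.
  left. apply Rdiv_lt_0_compat; lra.
Qed.


Definition Pol N t r := Omega_polar N (r * cos t, r * sin t).

Lemma Omega_bound N c : is_norm2 N -> 0 < c ->
  (forall a b, c * (Rabs a + Rabs b) <= N (a, b)) ->
  forall x, Omega N x -> Rabs (fst x) + Rabs (snd x) <= / c.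
Proof.
  intros H Hc Hl [a b] Hx. unfold Omega in Hx. simpl. specialize (Hl a b).
  apply Rmult_le_reg_l with c; auto. rewrite Rinv_r; lra.
Qed.

Lemma dot_bound (p1 p2 x1 x2 : R) :
  p1 * x1 + p2 * x2 <= (Rabs p1 + Rabs p2) * (Rabs x1 + Rabs x2).
Proof.
  pose proof (Rle_abs (p1 * x1)). pose proof (Rle_abs (p2 * x2)).
  rewrite Rabs_mult in *. pose proof (Rabs_pos p1). pose proof (Rabs_pos p2).
  pose proof (Rabs_pos x1). pose proof (Rabs_pos x2). nra.
Qed.

Lemma cs_bound t : Rabs (cos t) + Rabs (sin t) <= 2.
Proof.
  pose proof (COS_bound t). pose proof (SIN_bound t).
  assert (Rabs (cos t) <= 1) by (apply Rabs_le; lra).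
  assert (Rabs (sin t) <= 1) by (apply Rabs_le; lra). lra.
Qed.

Lemma Pol_small N c : is_norm2 N -> 0 < c ->
  (forall a b, c * (Rabs a + Rabs b) <= N (a, b)) -> forall t, Pol N t (c / 2).
Proof.
  intros H Hc Hl t [a b] Hx. unfold Omega in Hx. unfold dot2. simpl.
  pose proof (dot_bound (c / 2 * cos t) (c / 2 * sin t) a b).
  rewrite !Rabs_mult, (Rabs_right (c / 2)) in H0 by lra.
  pose proof (cs_bound t). specialize (Hl a b).
  pose proof (Rabs_pos a). pose proof (Rabs_pos b).
  assert ((c / 2 * Rabs (cos t) + c / 2 * Rabs (sin t)) * (Rabs a + Rabs b) <= c * (Rabs a + Rabs b)).
  { apply Rmult_le_compat_r. lra. nra. }
  lra.
Qed.

Lemma Pol_bound N : is_norm2 N -> forall t r, 0 <= r -> Pol N t r -> r <= nN N t.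
Proof.
  intros H t r Hr Hp. pose proof (nN_pos N H t) as Hn.
  specialize (Hp (cos t / nN N t, sin t / nN N t)).
  assert (HO : Omega N (cos t / nN N t, sin t / nN N t)).
  { red. unfold Rdiv. rewrite (Rmult_comm (cos t)), (Rmult_comm (sin t)), N_hom; auto.
    fold (nN N t). rewrite Rabs_right. right. field. lra. left. apply Rinv_0_lt_compat; lra. }
  specialize (Hp HO). unfold dot2 in Hp. simpl in Hp.
  replace (r * cos t * (cos t / nN N t) + r * sin t * (sin t / nN N t))
    with (r * (Rsqr (sin t) + Rsqr (cos t)) / nN N t) in Hp by (unfold Rsqr; field; lra).
  rewrite sin2_cos2, Rmult_1_r in Hp.
  apply Rmult_le_reg_r with (/ nN N t). apply Rinv_0_lt_compat; lra.
  rewrite Rinv_r; lra.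
Qed.

Lemma Pol_sym N : is_norm2 N -> forall t r, Pol N t r -> Pol N (t + PI) r.
Proof.
  intros H t r Hp [a b] Hx. specialize (Hp (-a, -b)).
  assert (Omega N (-a, -b)) by (red; rewrite N_opp; auto).
  specialize (Hp H0). unfold dot2 in *; simpl in *. rewrite neg_cos, neg_sin. nra.
Qed.

Lemma rad_pol_spec N c : is_norm2 N -> 0 < c ->
  (forall a b, c * (Rabs a + Rabs b) <= N (a, b)) -> forall t,
  c / 2 <= rad (Omega_polar N) t /\ rad (Omega_polar N) t <= nN N t /\
  Pol N t (rad (Omega_polar N) t) /\
  (forall r, 0 <= r -> Pol N t r -> r <= rad (Omega_polar N) t).
Proof.
  intros H Hc Hl t.
  set (E := fun r => 0 <= r /\ Omega_polar N (r * cos t, r * sin t)).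
  destruct (Lub_Rbar_correct E) as [Hub Hle].
  unfold rad. fold E. destruct (Lub_Rbar E) as [L| |] eqn:EL.
  - assert (HcE : E (c / 2)) by (split; [lra| apply Pol_small; auto]).
    assert (H1 : c / 2 <= L) by (apply (Hub _ HcE)).
    assert (H2 : L <= nN N t).
    { apply (Hle (Finite (nN N t))). intros r [Hr Hp]. simpl. apply Pol_bound; auto. }
    assert (H3 : forall r, 0 <= r -> Pol N t r -> r <= L).
    { intros r Hr Hp. apply (Hub r). split; auto. }
    simpl. split; [auto|]. split; [auto|]. split; [|auto].
    intros [a b] Hx. unfold dot2; simpl.
    set (d := cos t * a + sin t * b).
    destruct (Rle_or_lt d 0) as [Hd|Hd].
    + unfold d in Hd. nra.
    + assert (L <= / d).
      { apply (Hle (Finite (/ d))). intros r [Hr Hp]. simpl.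
        specialize (Hp (a, b) Hx). unfold dot2 in Hp; simpl in Hp.
        apply Rmult_le_reg_r with d; auto. rewrite Rinv_l by lra. unfold d. nra. }
      apply Rmult_le_compat_r with (r := d) in H0; [|lra]. rewrite Rinv_l in H0 by lra.
      unfold d in H0. nra.
  - exfalso. assert (Rbar_le p_infty (nN N t)).
    { apply Hle. intros r [Hr Hp]. simpl. apply Pol_bound; auto. }
    simpl in H0. auto.
  - exfalso. assert (HcE : E (c / 2)) by (split; [lra| apply Pol_small; auto]).
    specialize (Hub _ HcE). simpl in Hub. auto.
Qed.


Lemma nN_le N : is_norm2 N -> forall t, nN N t <= 2 * KN N.
Proof.
  intros H t. unfold nN. pose proof (N_up N H (cos t) (sin t)). pose proof (cs_bound t).
  pose proof (KN_pos N H). nra.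
Qed.

Lemma rad_pol_lip N c : is_norm2 N -> 0 < c ->
  (forall a b, c * (Rabs a + Rabs b) <= N (a, b)) -> forall s t,
  rad (Omega_polar N) t - rad (Omega_polar N) s <=
  (2 * KN N) ^ 2 * / c * (Rabs (cos s - cos t) + Rabs (sin s - sin t)).
Proof.
  intros H Hc Hl s t.
  destruct (rad_pol_spec N c H Hc Hl t) as [A1 [A2 [A3 A4]]].
  destruct (rad_pol_spec N c H Hc Hl s) as [B1 [B2 [B3 B4]]].
  set (r := rad (Omega_polar N) t) in *. set (r2 := rad (Omega_polar N) s) in *.
  set (d := Rabs (cos s - cos t) + Rabs (sin s - sin t)).
  set (M := / c).
  assert (HM : 0 < M) by (apply Rinv_0_lt_compat; auto).
  assert (Hd : 0 <= d) by (unfold d; pose proof (Rabs_pos (cos s - cos t)); pose proof (Rabs_pos (sin s - sin t)); lra).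
  assert (Hr : 0 < r) by lra.
  set (den := 1 + r * M * d).
  assert (Hden : 1 <= den) by (unfold den; pose proof (Rmult_le_pos (r * M) d); nra).
  set (r' := r / den).
  assert (Hr' : 0 < r') by (unfold r'; apply Rdiv_lt_0_compat; lra).
  assert (HP : Pol N s r').
  { intros [a b] Hx. unfold dot2; simpl.
    specialize (A3 (a, b) Hx). unfold dot2 in A3; simpl in A3.
    pose proof (Omega_bound N c H Hc Hl (a, b) Hx) as Hb. simpl in Hb. fold M in Hb.
    pose proof (dot_bound (cos s - cos t) (sin s - sin t) a b) as Hdb. fold d in Hdb.
    assert (E1 : cos s * a + sin s * b <= / r + d * M).
    { assert (cos t * a + sin t * b <= / r).
      { apply Rmult_le_reg_l with r; auto. rewrite Rinv_r by lra. lra. }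
      assert (d * (Rabs a + Rabs b) <= d * M) by (apply Rmult_le_compat_l; auto).
      lra. }
    replace (r' * cos s * a + r' * sin s * b) with (r' * (cos s * a + sin s * b)) by ring.
    apply Rle_trans with (r' * (/ r + d * M)). apply Rmult_le_compat_l; lra.
    unfold r'. unfold den in *. right. field. split; lra. }
  assert (r' <= r2) by (apply B4; [lra|auto]).
  assert (r - r' <= r * r * M * d).
  { unfold r'. replace (r - r / den) with (r * (r * M * d) / den) by (unfold den in *; field; lra).
    unfold Rdiv. apply Rle_trans with (r * (r * M * d) * 1).
    apply Rmult_le_compat_l. apply Rmult_le_pos; [lra|]. apply Rmult_le_pos; [|auto].
    apply Rmult_le_pos; lra.
    rewrite <- Rinv_1. apply Rinv_le_contravar; lra. lra. }
  pose proof (nN_le N H t).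
  assert (r * r <= (2 * KN N) ^ 2) by (pose proof (KN_pos N H); nra).
  assert (r * r * M * d <= (2 * KN N) ^ 2 * M * d).
  { apply Rmult_le_compat_r; auto. apply Rmult_le_compat_r; lra. }
  lra.
Qed.

Lemma Pol_sym2 N : is_norm2 N -> forall t r, Pol N (t + PI) r -> Pol N t r.
Proof.
  intros H t r Hp [a b] Hx. specialize (Hp (-a, -b)).
  assert (Omega N (-a, -b)) by (red; rewrite N_opp; auto).
  specialize (Hp H0). unfold dot2 in *; simpl in *. rewrite neg_cos, neg_sin in Hp. nra.
Qed.

Lemma nice_polar N : is_norm2 N -> nice (Omega_polar N).
Proof.
  intros H. destruct (N_low N H) as [c [Hc Hl]].
  split; [|split].
  - intros t. apply (cont_dom _ cos sin ((2 * KN N) ^ 2 * / c) t).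
    + pose proof (KN_pos N H). apply Rmult_le_pos. apply pow_le; lra.
      left; apply Rinv_0_lt_compat; auto.
    + intros x. apply Rabs_le. split.
      * pose proof (rad_pol_lip N c H Hc Hl x t). lra.
      * pose proof (rad_pol_lip N c H Hc Hl t x).
        rewrite (Rabs_minus_sym (cos t)), (Rabs_minus_sym (sin t)) in H0. lra.
    + apply continuity_cos. + apply continuity_sin.
  - intros t. destruct (rad_pol_spec N c H Hc Hl t) as [A1 _]. lra.
  - intros t. destruct (rad_pol_spec N c H Hc Hl t) as [A1 [A2 [A3 A4]]].
    destruct (rad_pol_spec N c H Hc Hl (t + PI)) as [B1 [B2 [B3 B4]]].
    apply Rle_antisym.
    + apply A4. lra. apply Pol_sym2; auto.
    + apply B4. lra. apply Pol_sym; auto.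
Qed.


Definition det2 (x y : R * R) := fst x * snd y - snd x * fst y.

Lemma sa_lt S : nice S -> forall a b, sector_area S a < sector_area S b -> a < b.
Proof.
  intros H a b Hl. destruct (Rlt_or_le a b); auto.
  destruct H0. apply (sa_incr S H) in H0. lra. subst. lra.
Qed.

Lemma sa_fullshift S : nice S -> forall a, sector_area S (a + 2 * PI) = sector_area S a + piS S.
Proof.
  intros H a. replace (a + 2 * PI) with (a + PI + PI) by ring. rewrite !sa_halfshift; auto. field.
Qed.

Lemma det_neg S : nice S -> forall t1 t2, t1 + piS S < t2 < t1 + 2 * piS S ->
  det2 (convP S t1) (convP S t2) < 0.
Proof.
  intros H t1 t2 Ht.
  destruct (convP_param S H t1) as [b1 [G1 E1]]. destruct (convP_param S H t2) as [b2 [G2 E2]].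
  rewrite E1, E2. unfold det2; simpl.
  assert (b1 + PI < b2). { apply (sa_lt S H). rewrite sa_halfshift, G1, G2; auto. lra. }
  assert (b2 < b1 + 2 * PI). { apply (sa_lt S H). rewrite sa_fullshift, G1, G2; auto. lra. }
  pose proof (sin_lt_0 (b2 - b1)). rewrite sin_minus in H2.
  destruct H as [_ [Hp _]]. pose proof (Hp b1). pose proof (Hp b2).
  assert (sin b2 * cos b1 - cos b2 * sin b1 < 0) by (apply H2; lra).
  replace (rad S b1 * cos b1 * (rad S b2 * sin b2) - rad S b1 * sin b1 * (rad S b2 * cos b2))
    with (rad S b1 * rad S b2 * (sin b2 * cos b1 - cos b2 * sin b1)) by ring.
  assert (0 < rad S b1 * rad S b2) by (apply Rmult_lt_0_compat; auto).
  nra.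
Qed.

Lemma in_Omega N : is_norm2 N -> forall th, Omega N (convP (Omega N) th).
Proof.
  intros H th. destruct (convP_param _ (nice_Omega N H) th) as [b [_ E]]. rewrite E.
  apply Omega_point; auto.
Qed.

Lemma in_polar N : is_norm2 N -> forall ph, Omega_polar N (convP (Omega_polar N) ph).
Proof.
  intros H ph. destruct (convP_param _ (nice_polar N H) ph) as [b [_ E]]. rewrite E.
  destruct (N_low N H) as [c [Hc Hl]].
  destruct (rad_pol_spec N c H Hc Hl b) as [_ [_ [A _]]]. apply A.
Qed.

Lemma dot_le N : is_norm2 N -> forall th ph,
  dot2 (convP (Omega_polar N) ph) (convP (Omega N) th) <= 1.
Proof. intros H th ph. apply in_polar; auto. apply in_Omega; auto. Qed.

Lemma corresp_dot N th ph : corresp N th ph <->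
  dot2 (convP (Omega_polar N) ph) (convP (Omega N) th) = 1.
Proof.
  unfold corresp, cosS, sinS, dot2. split; intros E; rewrite <- E; ring.
Qed.


Lemma arc_core N : is_norm2 N -> forall (q : R * R) ba bb c,
  (forall x, Omega N x -> dot2 q x <= 1) ->
  ba < c < bb -> bb < ba + PI ->
  dot2 q (rad (Omega N) ba * cos ba, rad (Omega N) ba * sin ba) = 1 ->
  dot2 q (rad (Omega N) bb * cos bb, rad (Omega N) bb * sin bb) = 1 ->
  dot2 q (rad (Omega N) c * cos c, rad (Omega N) c * sin c) = 1.
Proof.
  intros H [q1 q2] ba bb c Hq Hc Hb Ea Eb.
  pose proof (nice_Omega N H) as HO. destruct HO as [_ [Hpos _]].
  set (rx := rad (Omega N) ba) in *. set (ry := rad (Omega N) bb) in *.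
  assert (Hrx : 0 < rx) by apply Hpos. assert (Hry : 0 < ry) by apply Hpos.
  set (ca := cos ba) in *. set (sa := sin ba) in *. set (cb := cos bb) in *. set (sb := sin bb) in *.
  set (cc := cos c). set (sc := sin c).
  assert (Hs1 : 0 < sc * ca - cc * sa).
  { pose proof (sin_gt_0 (c - ba)). rewrite sin_minus in H0. apply H0; lra. }
  assert (Hs2 : 0 < sb * cc - cb * sc).
  { pose proof (sin_gt_0 (bb - c)). rewrite sin_minus in H0. apply H0; lra. }
  assert (Hs3 : 0 < sb * ca - cb * sa).
  { pose proof (sin_gt_0 (bb - ba)). rewrite sin_minus in H0. apply H0; lra. }
  assert (Hcs : cc * cc + sc * sc = 1).
  { pose proof (sin2_cos2 c). unfold Rsqr in H0. unfold cc, sc. lra. }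
  set (s1 := sc * ca - cc * sa) in *. set (s2 := sb * cc - cb * sc) in *.
  set (s3 := sb * ca - cb * sa) in *.
  set (D := ry * s2 + rx * s1).
  assert (HD : 0 < D) by (unfold D; pose proof (Rmult_lt_0_compat _ _ Hry Hs2); pose proof (Rmult_lt_0_compat _ _ Hrx Hs1); lra).
  set (l := ry * s2 / D). set (m := rx * s1 / D).
  assert (Hl : 0 < l) by (unfold l; apply Rdiv_lt_0_compat; [apply Rmult_lt_0_compat|]; auto).
  assert (Hm : 0 < m) by (unfold m; apply Rdiv_lt_0_compat; [apply Rmult_lt_0_compat|]; auto).
  assert (Hlm : l + m = 1) by (unfold l, m; rewrite <- Rdiv_plus_distr; fold D; field; lra).
  set (z1 := l * (rx * ca) + m * (ry * cb)). set (z2 := l * (rx * sa) + m * (ry * sb)).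
  assert (Hdet : cc * z2 - sc * z1 = 0).
  { replace (cc * z2 - sc * z1) with (- l * (rx * s1) + m * (ry * s2)) by (unfold z1, z2, s1, s2; ring).
    unfold l, m. field. lra. }
  set (rho := cc * z1 + sc * z2).
  assert (Ez1 : z1 = rho * cc).
  { unfold rho. replace z1 with (z1 * (cc * cc + sc * sc)) at 1 by (rewrite Hcs; ring).
    replace (z1 * (cc * cc + sc * sc)) with ((cc * z1 + sc * z2) * cc - sc * (cc * z2 - sc * z1)) by ring.
    rewrite Hdet. ring. }
  assert (Ez2 : z2 = rho * sc).
  { unfold rho. replace z2 with (z2 * (cc * cc + sc * sc)) at 1 by (rewrite Hcs; ring).
    replace (z2 * (cc * cc + sc * sc)) with ((cc * z1 + sc * z2) * sc + cc * (cc * z2 - sc * z1)) by ring.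
    rewrite Hdet. ring. }
  assert (Hrho : 0 < rho).
  { assert (E1 : ca * z2 - sa * z1 = m * ry * s3) by (unfold z1, z2, s3; ring).
    rewrite Ez1, Ez2 in E1.
    assert (rho * s1 = m * ry * s3) by (rewrite <- E1; unfold s1; ring).
    assert (0 < m * ry * s3) by (apply Rmult_lt_0_compat; [apply Rmult_lt_0_compat|]; auto).
    nra. }
  unfold dot2 in *; simpl in *.
  assert (Hqz : q1 * z1 + q2 * z2 = 1).
  { unfold z1, z2. replace (q1 * (l * (rx * ca) + m * (ry * cb)) + q2 * (l * (rx * sa) + m * (ry * sb)))
      with (l * (q1 * (rx * ca) + q2 * (rx * sa)) + m * (q1 * (ry * cb) + q2 * (ry * sb))) by ring.
    replace (q1 * (rx * ca) + q2 * (rx * sa)) with 1 by (rewrite <- Ea; ring).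
    replace (q1 * (ry * cb) + q2 * (ry * sb)) with 1 by (rewrite <- Eb; ring). lra. }
  assert (HNz : N (z1, z2) <= 1).
  { unfold z1, z2. eapply Rle_trans. apply N_tri; auto.
    rewrite (N_hom N H l), (N_hom N H m), !Rabs_right by lra.
    pose proof (Omega_point N H ba). pose proof (Omega_point N H bb).
    red in H0, H1. fold rx ca sa in H0. fold ry cb sb in H1.
    replace (rx * ca) with (rx * ca) in * by reflexivity.
    assert (l * N (rx * ca, rx * sa) <= l * 1) by (apply Rmult_le_compat_l; lra).
    assert (m * N (ry * cb, ry * sb) <= m * 1) by (apply Rmult_le_compat_l; lra).
    lra. }
  rewrite Ez1, Ez2, N_hom, Rabs_right in HNz by (auto; lra).
  fold cc sc in HNz. change (N (cc, sc)) with (nN N c) in HNz.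
  pose proof (nN_pos N H c).
  assert (Hrc : rad (Omega N) c = 1 / nN N c) by (apply rad_Omega; auto).
  set (rc := rad (Omega N) c) in *.
  assert (rho <= rc). { rewrite Hrc. apply Rmult_le_reg_r with (nN N c); auto.
    unfold Rdiv. rewrite Rmult_assoc, Rinv_l; lra. }
  rewrite Ez1, Ez2 in Hqz.
  assert (Hu : q1 * cc + q2 * sc = / rho).
  { apply Rmult_eq_reg_l with rho. rewrite Rinv_r by lra. rewrite <- Hqz. ring. lra. }
  apply Rle_antisym.
  - exact (Hq _ (Omega_point N H c)).
  - replace (q1 * (rc * cc) + q2 * (rc * sc)) with (rc * (q1 * cc + q2 * sc)) by ring.
    rewrite Hu. apply Rmult_le_reg_r with rho; auto. rewrite Rmult_assoc, Rinv_l; lra.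
Qed.


Lemma arc N : is_norm2 N -> forall (q : R * R) al be ga,
  (forall x, Omega N x -> dot2 q x <= 1) ->
  al <= ga <= be -> be < al + piS (Omega N) ->
  dot2 q (convP (Omega N) al) = 1 -> dot2 q (convP (Omega N) be) = 1 ->
  dot2 q (convP (Omega N) ga) = 1.
Proof.
  intros H q al be ga Hq Hg Hb Ea Eb.
  pose proof (nice_Omega N H) as HO.
  destruct (convP_param _ HO al) as [ba [Ga Pa]].
  destruct (convP_param _ HO be) as [bb [Gb Pb]].
  destruct (convP_param _ HO ga) as [bc [Gc Pc]].
  rewrite Pa in Ea. rewrite Pb in Eb. rewrite Pc.
  assert (ba <= bc) by (apply (sa_le _ HO); lra).
  assert (bc <= bb) by (apply (sa_le _ HO); lra).
  assert (bb < ba + PI) by (apply (sa_lt _ HO); rewrite sa_halfshift; auto; lra).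
  destruct (Req_dec bc ba) as [E|E]. rewrite E; auto.
  destruct (Req_dec bc bb) as [E2|E2]. rewrite E2; auto.
  apply (arc_core N H q ba bb bc); auto. lra.
Qed.

Lemma convP_Zper S : nice S -> forall (k : Z) t, convP S (t + IZR k * (2 * piS S)) = convP S t.
Proof.
  intros H k t.
  pose proof (shift_Z (fun t => fst (convP S t)) (2 * piS S) 0) as A.
  pose proof (shift_Z (fun t => snd (convP S t)) (2 * piS S) 0) as B.
  simpl in A, B.
  apply injective_projections; [rewrite A | rewrite B]; try ring.
  all: intros; rewrite convP_full; auto; ring.
Qed.

Lemma corresp_of_dot N th ph :
  dot2 (convP (Omega_polar N) ph) (convP (Omega N) th) = 1 -> corresp N th ph.
Proof. apply (proj2 (corresp_dot N th ph)). Qed.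
Lemma dot_of_corresp N th ph : corresp N th ph ->
  dot2 (convP (Omega_polar N) ph) (convP (Omega N) th) = 1.
Proof. apply (proj1 (corresp_dot N th ph)). Qed.

Definition maxint N (Cc : R -> R -> Prop) ph a b :=
  a <= b /\ (forall th, Cc ph th <-> a <= th <= b) /\
  (forall th, a <= th <= b -> corresp N th ph) /\
  (forall a' b', a' <= a -> b <= b' ->
        (forall th, a' <= th <= b' -> corresp N th ph) -> a' = a /\ b' = b).

Lemma lift N Cc ph a b th : is_norm2 N -> maxint N Cc ph a b -> corresp N th ph ->
  exists k : Z, a + IZR k * (2 * piS (Omega N)) <= th <= b + IZR k * (2 * piS (Omega N)).
Proof.
  intros H [Hab [HC [Hcor Hmax]]] Hth.
  pose proof (nice_Omega N H) as HO. pose proof (piS_pos _ HO) as Hp.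
  remember (piS (Omega N)) as pi eqn:Epi.
  destruct (floor_ex (th - a) (2 * pi)) as [k Hk]. timeout 5 lra.
  set (t2 := th + IZR (- k) * (2 * pi)).
  assert (Ht2 : corresp N t2 ph).
  { apply corresp_of_dot. unfold t2. rewrite Epi, convP_Zper by exact HO. exact (dot_of_corresp N th ph Hth). }
  assert (Ht2r : a <= t2 < a + 2 * pi) by (unfold t2; rewrite opp_IZR; timeout 5 lra).
  destruct (Rle_or_lt t2 b) as [Hb|Hb].
  { exists k. unfold t2 in *. rewrite opp_IZR in *. timeout 5 lra. }
  exfalso.
  set (q := convP (Omega_polar N) ph).
  assert (Hq : forall x, Omega N x -> dot2 q x <= 1) by (apply in_polar; auto).
  assert (Ea : dot2 q (convP (Omega N) a) = 1) by (apply dot_of_corresp, Hcor; timeout 5 lra).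
  assert (Et : dot2 q (convP (Omega N) t2) = 1) by (exact (dot_of_corresp N t2 ph Ht2)).
  destruct (Rtotal_order (t2 - a) pi) as [C|[C|C]].
  - destruct (Hmax a t2) as [_ E]; try timeout 5 lra.
    intros t Ht. apply corresp_of_dot. apply (arc N H q a t2 t); try assumption; try timeout 5 lra.
  - replace t2 with (a + pi) in Et by timeout 5 lra. rewrite Epi in Et. rewrite convP_half in Et by exact HO.
    unfold dot2 in *; simpl in *. timeout 5 lra.
  - set (al := t2 + IZR (-1) * (2 * pi)).
    assert (Eal : dot2 q (convP (Omega N) al) = 1) by (unfold al; rewrite Epi, convP_Zper by exact HO; exact Et).
    assert (Hal : al = t2 - 2 * pi) by (unfold al; simpl; ring).
    destruct (Hmax al b) as [E _]; try timeout 5 lra.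
    intros t Ht. destruct (Rle_or_lt t a).
    + apply corresp_of_dot. apply (arc N H q al a t); try assumption; try timeout 5 lra.
    + apply Hcor; timeout 5 lra.
Qed.


Lemma eps_eq a b : (forall eps, 0 < eps -> a <= b + eps /\ b <= a + eps) -> a = b.
Proof.
  intros H. destruct (Rtotal_order a b) as [C|[C|C]]; auto.
  - destruct (H ((b - a) / 2)) as [_ H2]; lra.
  - destruct (H ((a - b) / 2)) as [H1 _]; lra.
Qed.

Lemma dir_deriv (f : R -> R -> R) x y l1 l2 q1 q2 :
  differentiable_pt_lim f x y l1 l2 ->
  (forall u v, q1 * u + q2 * v <= f u v) -> q1 * x + q2 * y = f x y -> q1 = l1 /\ q2 = l2.
Proof.
  intros Hd Hs Hx. split; apply eps_eq; intros eps He;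
  destruct (Hd (mkposreal eps He)) as [[d Hdp] Hl]; simpl in Hl.
  - set (t := d / 2).
    assert (Ht : 0 < t) by (unfold t; lra).
    pose proof (Hl (x + t) y) as A. pose proof (Hl (x - t) y) as B.
    replace (x + t - x) with t in A by ring. replace (x - t - x) with (- t) in B by ring.
    replace (y - y) with 0 in A, B by ring.
    rewrite Rabs_R0 in A, B. rewrite Rabs_right in A by lra. rewrite Rabs_Ropp, Rabs_right in B by lra.
    rewrite Rmax_left in A, B by lra.
    assert (Ha : t < d) by (unfold t; lra).
    specialize (A Ha Hdp). specialize (B Ha Hdp).
    apply Rabs_le_between in A. apply Rabs_le_between in B.
    pose proof (Hs (x + t) y). pose proof (Hs (x - t) y).
    split; apply Rmult_le_reg_r with t; auto; nra.
  - set (t := d / 2).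
    assert (Ht : 0 < t) by (unfold t; lra).
    pose proof (Hl x (y + t)) as A. pose proof (Hl x (y - t)) as B.
    replace (y + t - y) with t in A by ring. replace (y - t - y) with (- t) in B by ring.
    replace (x - x) with 0 in A, B by ring.
    rewrite Rabs_R0 in A, B. rewrite Rabs_right in A by lra. rewrite Rabs_Ropp, Rabs_right in B by lra.
    rewrite Rmax_right in A, B by lra.
    assert (Ha : t < d) by (unfold t; lra).
    specialize (A Hdp Ha). specialize (B Hdp Ha).
    apply Rabs_le_between in A. apply Rabs_le_between in B.
    pose proof (Hs x (y + t)). pose proof (Hs x (y - t)).
    split; apply Rmult_le_reg_r with t; auto; nra.
Qed.


Lemma Cc_plus N Cc : is_C_o N Cc -> forall ph th, Cc ph th ->
  Cc (ph + 2 * piS (Omega_polar N)) (th + 2 * piS (Omega N)).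
Proof.
  intros [_ [_ Hn]] ph th H. pose proof (proj2 (Hn 1%Z ph th) H) as A.
  replace (2 * IZR 1 * piS (Omega_polar N)) with (2 * piS (Omega_polar N)) in A by (simpl; ring).
  replace (2 * IZR 1 * piS (Omega N)) with (2 * piS (Omega N)) in A by (simpl; ring).
  exact A.
Qed.

Lemma Cc_minus N Cc : is_C_o N Cc -> forall ph th, Cc ph th ->
  Cc (ph - 2 * piS (Omega_polar N)) (th - 2 * piS (Omega N)).
Proof.
  intros [_ [_ Hn]] ph th H. pose proof (proj2 (Hn (-1)%Z ph th) H) as A.
  replace (ph + 2 * IZR (-1) * piS (Omega_polar N)) with (ph - 2 * piS (Omega_polar N)) in A by (simpl; ring).
  replace (th + 2 * IZR (-1) * piS (Omega N)) with (th - 2 * piS (Omega N)) in A by (simpl; ring).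
  exact A.
Qed.

Lemma Cc_int N Cc : is_C_o N Cc -> forall ph, exists a b, maxint N Cc ph a b.
Proof.
  intros [Hi _] ph. destruct (Hi ph) as [a [b Hab]]. exists a, b. exact Hab.
Qed.

Lemma half_dot N : is_norm2 N -> forall ph th,
  dot2 (convP (Omega_polar N) (ph + piS (Omega_polar N))) (convP (Omega N) (th + piS (Omega N)))
  = dot2 (convP (Omega_polar N) ph) (convP (Omega N) th).
Proof.
  intros H ph th. rewrite (convP_half _ (nice_polar N H)), (convP_half _ (nice_Omega N H)).
  unfold dot2; simpl. ring.
Qed.

Lemma Zk0 (k : Z) (p : R) : 0 < p -> - p <= IZR k * (2 * p) <= p -> IZR k = 0.
Proof.
  intros Hp [H1 H2].
  assert (IZR k < 1). { destruct (Rlt_or_le (IZR k) 1); auto. nra. }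
  assert (-1 < IZR k). { destruct (Rlt_or_le (-1) (IZR k)); auto. nra. }
  apply lt_IZR in H. apply lt_IZR in H0. assert (k = 0%Z) by lia. subst. reflexivity.
Qed.

Lemma core N Cc ph ps pho phpso : is_norm2 N -> is_C_o N Cc ->
  Cc ph pho -> Cc (ph + ps) phpso ->
  piS (Omega_polar N) < ps -> phpso < pho + 2 * piS (Omega N) ->
  JR N ph ps pho phpso > 0.
Proof.
  intros H HC H1 H2 Hps Hlt.
  pose proof (nice_Omega N H) as HO. pose proof (nice_polar N H) as HP.
  pose proof (piS_pos _ HO) as Hpo. pose proof (piS_pos _ HP) as Hpp.
  remember (piS (Omega N)) as pO eqn:EpO. remember (piS (Omega_polar N)) as pP eqn:EpP.
  destruct HC as [HCi [Hmono Hnorm]] eqn:HCeq.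
  destruct (Cc_int N Cc HC ph) as [a [b Hab]].
  destruct (Cc_int N Cc HC (ph + pP)) as [a2 [b2 Hab2]].
  pose proof Hab as [Hle [Hiff [Hcor Hmax]]].
  pose proof Hab2 as [Hle2 [Hiff2 [Hcor2 Hmax2]]].
  assert (Hpho : a <= pho <= b) by (apply Hiff; exact H1).
  assert (Hb_a2 : b <= a2).
  { apply (Hmono ph (ph + pP)). lra. apply Hiff; lra. apply Hiff2; lra. }
  assert (Hb2_a : b2 <= a + 2 * pO).
  { apply (Hmono (ph + pP) (ph + 2 * pP)). lra. apply Hiff2; lra.
    subst pO pP. apply Cc_plus; auto. apply Hiff; lra. }
  assert (Hshift : forall th, a2 <= th <= b2 -> a <= th - pO <= b).
  { intros th Hth.
    assert (Hc : corresp N (th - pO) ph).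
    { apply corresp_of_dot. rewrite <- (half_dot N H). subst pO pP.
      replace (th - piS (Omega N) + piS (Omega N)) with th by ring.
      apply dot_of_corresp, Hcor2. exact Hth. }
    destruct (lift N Cc ph a b (th - pO) H Hab Hc) as [k Hk]. rewrite <- EpO in Hk.
    assert (IZR k = 0).
    { apply (Zk0 k pO). lra. lra. }
    rewrite H0 in Hk. lra. }
  assert (Hb2 : b2 = b + pO).
  { destruct (Hmax2 (a + pO) (b + pO)) as [_ E]. 
    - pose proof (Hshift a2). lra.
    - pose proof (Hshift b2). lra.
    - intros th Hth. apply corresp_of_dot.
      replace th with (th - pO + pO) by ring. replace (ph + pP) with (ph + pP) by reflexivity.
      subst pO pP. rewrite (half_dot N H). apply dot_of_corresp, Hcor. lra.
    - lra. }
  assert (Hge : b2 <= phpso).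
  { apply (Hmono (ph + pP) (ph + ps)). lra. apply Hiff2; lra. exact H2. }
  assert (EJ : JR N ph ps pho phpso =
     2 - dot2 (convP (Omega_polar N) (ph + ps)) (convP (Omega N) pho)
       - dot2 (convP (Omega_polar N) ph) (convP (Omega N) phpso)
       - ps * det2 (convP (Omega N) pho) (convP (Omega N) phpso)).
  { unfold JR, dot2, det2, cosS, sinS. ring. }
  rewrite EJ.
  pose proof (dot_le N H pho (ph + ps)) as A1.
  pose proof (dot_le N H phpso ph) as A2.
  destruct (Req_dec phpso (pho + pO)) as [E|E].
  - assert (Hc1 : dot2 (convP (Omega_polar N) ph) (convP (Omega N) pho) = 1).
    { apply dot_of_corresp, Hcor. lra. }
    rewrite E. subst pO. rewrite (convP_half _ HO).
    unfold dot2, det2 in *; simpl in *. nra.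
  - assert (det2 (convP (Omega N) pho) (convP (Omega N) phpso) < 0).
    { apply det_neg; auto. subst pO. lra. }
    assert (0 < ps * - det2 (convP (Omega N) pho) (convP (Omega N) phpso)).
    { apply Rmult_lt_0_compat; lra. }
    lra.
Qed.


Lemma convP_inj S : nice S -> forall t1 t2, t2 - piS S < t1 < t2 -> convP S t1 <> convP S t2.
Proof.
  intros H t1 t2 Ht E.
  destruct (convP_param S H t1) as [b1 [G1 E1]]. destruct (convP_param S H t2) as [b2 [G2 E2]].
  rewrite E1, E2 in E. injection E as Ec Es.
  assert (b1 < b2) by (apply (sa_lt S H); lra).
  assert (b2 < b1 + PI) by (apply (sa_lt S H); rewrite sa_halfshift; auto; lra).
  pose proof (sin_gt_0 (b2 - b1)). rewrite sin_minus in H2.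
  assert (Hs : 0 < sin b2 * cos b1 - cos b2 * sin b1) by (apply H2; lra).
  destruct H as [_ [Hp _]]. pose proof (Hp b1). pose proof (Hp b2).
  assert (rad S b1 * rad S b2 * (sin b2 * cos b1 - cos b2 * sin b1) = 0).
  { replace (rad S b1 * rad S b2 * (sin b2 * cos b1 - cos b2 * sin b1))
      with ((rad S b2 * sin b2) * (rad S b1 * cos b1) - (rad S b2 * cos b2) * (rad S b1 * sin b1)) by ring.
    rewrite Ec, Es. ring. }
  assert (0 < rad S b1 * rad S b2) by (apply Rmult_lt_0_compat; auto).
  nra.
Qed.

Lemma support N : is_norm2 N -> forall q, Omega_polar N q -> forall a b, fst q * a + snd q * b <= N (a, b).
Proof.
  intros H q Hq a b. destruct (Req_dec (N (a, b)) 0) as [E|E].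
  - apply N_def in E; auto. destruct E; subst. rewrite N_zero; auto. lra.
  - pose proof (N_pos N H (a, b)). set (n := N (a, b)) in *.
    assert (Omega N (/ n * a, / n * b)).
    { red. rewrite N_hom; auto. fold n. rewrite Rabs_right. rewrite Rinv_l; lra.
      left; apply Rinv_0_lt_compat; lra. }
    specialize (Hq _ H1). unfold dot2 in Hq; simpl in Hq.
    apply Rmult_le_reg_l with (/ n). apply Rinv_0_lt_compat; lra.
    rewrite Rinv_l by lra. lra.
Qed.

Theorem proposition3p10 (N : R * R -> R) (Cc : R -> R -> Prop) :
  is_norm2 N -> is_C_o N Cc ->
  (forall ph ps pho phpso,
     D0 Cc ph -> Cc ph pho ->
     D0 Cc (ph + ps) -> Cc (ph + ps) phpso ->
     piS (Omega_polar N) < ps < 2 * piS (Omega_polar N) - delta_minus Cc ph ->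
     JR N ph ps pho phpso > 0) /\
  (norm_C1 N ->
   forall ph ps pho phpso,
     D0 Cc ph -> Cc ph pho ->
     D0 Cc (ph + ps) -> Cc (ph + ps) phpso ->
     piS (Omega_polar N) < ps < 2 * piS (Omega_polar N) ->
     JR N ph ps pho phpso > 0).
Proof.
  intros HN HC.
  pose proof (nice_Omega N HN) as HO. pose proof (nice_polar N HN) as HP.
  pose proof (piS_pos _ HO) as Hpo. pose proof (piS_pos _ HP) as Hpp.
  pose proof HC as [HCi [Hmono Hnorm]].
  assert (Hle : forall ph ps pho phpso, Cc ph pho -> Cc (ph + ps) phpso ->
            ps < 2 * piS (Omega_polar N) -> phpso <= pho + 2 * piS (Omega N)).
  { intros ph ps pho phpso H1 H2 Hps. apply (Hmono (ph + ps) (ph + 2 * piS (Omega_polar N))).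
    lra. exact H2. apply Cc_plus; auto. }
  split.
  - intros ph ps pho phpso _ H1 _ H2 [Hlo Hhi].
    set (E := fun ph' => exists th, Cc ph th /\ Cc ph' th) in *.
    assert (Hlb0 : forall ph', E ph' -> ph - 2 * piS (Omega_polar N) <= ph').
    { intros ph' [th [A B]]. destruct (Rle_or_lt (ph - 2 * piS (Omega_polar N)) ph') as [C|C]; auto.
      exfalso. pose proof (Hmono ph' (ph - 2 * piS (Omega_polar N)) th (th - 2 * piS (Omega N)) C B
        (Cc_minus N Cc HC ph th A)). lra. }
    unfold delta_minus in Hhi. fold E in Hhi.
    destruct (Glb_Rbar_correct E) as [Hlb Hgr].
    destruct (Glb_Rbar E) as [g| |] eqn:Eg.
    + simpl in Hhi.
      assert (g <= ph) by (apply (Hlb ph); exists pho; split; assumption).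
      apply (core N Cc ph ps pho phpso HN HC H1 H2 Hlo).
      destruct (Hle ph ps pho phpso H1 H2) as [C|C]; [lra|exact C|].
      exfalso.
      assert (E (ph + ps - 2 * piS (Omega_polar N))).
      { exists pho. split; [exact H1|].
        replace pho with (phpso - 2 * piS (Omega N)) by lra. apply Cc_minus; auto. }
      specialize (Hlb _ H0). simpl in Hlb. lra.
    + exfalso. assert (E ph) by (exists pho; split; assumption).
      specialize (Hlb _ H). simpl in Hlb. exact Hlb.
    + exfalso. assert (Rbar_le (ph - 2 * piS (Omega_polar N)) m_infty).
      { apply Hgr. intros x Hx. simpl. apply Hlb0; exact Hx. }
      simpl in H. exact H.
  - intros HC1 ph ps pho phpso _ H1 _ H2 [Hlo Hhi].
    apply (core N Cc ph ps pho phpso HN HC H1 H2 Hlo).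
    destruct (Hle ph ps pho phpso H1 H2 Hhi) as [C|C]; [exact C|].
    exfalso.
    set (ph' := ph + ps - 2 * piS (Omega_polar N)).
    assert (H3 : Cc ph' pho).
    { unfold ph'. replace pho with (phpso - 2 * piS (Omega N)) by lra. apply Cc_minus; auto. }
    destruct (Cc_int N Cc HC ph) as [a [b [_ [Hi [Hc _]]]]].
    destruct (Cc_int N Cc HC ph') as [a' [b' [_ [Hi' [Hc' _]]]]].
    assert (D1 := dot_of_corresp N pho ph (Hc pho (proj1 (Hi pho) H1))).
    assert (D2 := dot_of_corresp N pho ph' (Hc' pho (proj1 (Hi' pho) H3))).
    pose proof (in_Omega N HN pho) as HxO.
    pose proof (support N HN _ (in_polar N HN ph)) as S1.
    pose proof (support N HN _ (in_polar N HN ph')) as S2.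
    destruct (convP (Omega N) pho) as [x1 x2] eqn:Ex.
    red in HxO. unfold dot2 in D1, D2; simpl in D1, D2.
    assert (Hn1 : fst (convP (Omega_polar N) ph) * x1 + snd (convP (Omega_polar N) ph) * x2 = N (x1, x2)).
    { pose proof (S1 x1 x2). lra. }
    assert (Hn2 : fst (convP (Omega_polar N) ph') * x1 + snd (convP (Omega_polar N) ph') * x2 = N (x1, x2)).
    { pose proof (S2 x1 x2). lra. }
    assert (Hx0 : (x1, x2) <> (0, 0)).
    { intros E0. injection E0 as -> ->. lra. }
    destruct HC1 as [dx [dy Hd]]. destruct (Hd x1 x2 Hx0) as [Hdiff _].
    destruct (dir_deriv (fun u v => N (u, v)) x1 x2 _ _ _ _ Hdiff S1 Hn1) as [A1 A2].
    destruct (dir_deriv (fun u v => N (u, v)) x1 x2 _ _ _ _ Hdiff S2 Hn2) as [B1 B2].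
    apply (convP_inj _ HP ph' ph). unfold ph'. lra.
    apply injective_projections; congruence.
Qed.
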